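(* Let $\mu_\varepsilon$ be a Borel probability measure on $\mathbb{R}$ and $\eta\in\mathcal{M}(\mathbb{R},\mathcal{B}(\mathbb{R}))$. If $\mu_\varepsilon$ or $\eta$ is continuous (has no atoms), then $|\pi_{\eta*\mu_\varepsilon}|(\mathbb{R})\ge1$.
   Context: $\mathcal{M}(\mathbb{R},\mathcal{B}(\mathbb{R}))$ is the space of finite signed Borel measures on $\mathbb{R}$; $|\cdot|$ denotes total variation. $(\mu*\nu)(A):=\int\int\mathbf 1_A(x+y)\nu(dx)\mu(dy)$. $\pi_{\eta*\mu_\varepsilon}:=\delta_{\{0\}}-\eta*\mu_\varepsilon$. *)

(* Defs.v *)
From HB Require Import structures.
From mathcomp Require Import all_boot all_order all_algebra.
From mathcomp Require Import all_classical all_reals all_analysis.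
Set Implicit Arguments. Unset Strict Implicit. Unset Printing Implicit Defensive.
Import Order.TTheory GRing.Theory Num.Theory.
Local Open Scope classical_set_scope.
Local Open Scope ring_scope.
Local Open Scope ereal_scope.

Definition tot_var_measure (R : realType) (nu : set R -> \bar R) (A : set R)
  : \bar R :=
  ereal_sup [set s | exists (n : nat) (F : nat -> set R),
     [/\ (forall i, measurable (F i)),
         trivIset `I_n F,
         \bigcup_(i in `I_n) F i = A &
         s = \sum_(i < n) `| nu (F i) |]].

(* Convolution (mu * eta)(A) = int int 1_A(x+y) eta(dx) mu(dy); the inner
   integral of the indicator is eta({x | x + y \in A}). *)
Definition convol (R : realType) (mu : {measure set R -> \bar R})
  (eta : set R -> \bar R) (A : set R) : \bar R :=
  \int[mu]_y eta [set x | A (x + y)%R].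

Definition pi_conv (R : realType) (eta : set R -> \bar R)
  (mu : {measure set R -> \bar R}) (A : set R) : \bar R :=
  @dirac _ R (0%R : R) R A - convol mu eta A.

Definition atomless (R : realType) (nu : set R -> \bar R) : Prop :=
  forall x : R, nu [set x] = 0.

(* Main.v *)
Require Import Defs.
From HB Require Import structures.
From mathcomp Require Import all_boot all_order all_algebra.
From mathcomp Require Import all_classical all_reals all_analysis.
From mathcomp Require Import measurable_realfun.
Import Order.TTheory GRing.Theory Num.Theory.
Local Open Scope classical_set_scope.
Local Open Scope ring_scope.
Local Open Scope ereal_scope.

Lemma charge_ub (R : realType) (nu : {charge set R -> \bar R}) :
  exists M : R, forall A, measurable A -> nu A <= M%:E.
Proof.
have [P [N [[mP posP] [mN negN] PN PN0]]] := Hahn_decomposition nu.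
have fP : nu P \is a fin_num by apply: fin_num_measure.
exists (fine (nu P)) => A mA; rewrite fineK //.
have eA : A = (A `&` P) `|` (A `&` N) by rewrite -setIUr PN setIT.
have eP : nu P = nu (A `&` P) + nu (P `\` A).
  rewrite -chargeU; [|exact: measurableI|exact: measurableD|].
    by rewrite setIC setUIDK.
  by rewrite -subset0 => x [[Ax _] [_ nAx]].
have dA : nu A = nu (A `&` P) + nu (A `&` N).
  rewrite -chargeU; [by rewrite -eA|exact: measurableI|exact: measurableI|].
  by rewrite setIACA setIid PN0 setI0.
have h1 : nu (A `&` N) <= 0 by apply: negN; [exact: measurableI|exact: subIsetr].
have h3 : 0 <= nu (P `\` A) by apply: posP; [exact: measurableD|exact: subDsetl].
move: dA eP => -> ->; apply: leeD; [exact: lexx|exact: le_trans h1 h3].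
Qed.

Lemma eset (R : realType) (y : R) : [set x | x + y = 0]%R = [set - y]%R.
Proof. by apply/seteqP; split => x /=; [move/eqP; rewrite addr_eq0 => /eqP|move=> ->; rewrite addNr]. Qed.

Lemma atoms_finite (R : realType) (nu : {charge set R -> \bar R}) (c : R) :
  (0 < c)%R -> finite_set [set y | c%:E < nu [set x | x + y = 0]%R].
Proof.
move=> c0; have [M hM] := @charge_ub _ nu.
apply: contrapT => /infiniteP /pcard_leP [f].
have fS := @funS _ _ _ _ f.
have fI : injective f by move=> a b; apply: (@inj _ _ _ f); rewrite ?inE.
set n := (Num.Def.trunc (M / c)).+1.
pose F k := [set x | x + f k = 0]%R.
have mF : forall k, measurable (F k) by move=> k; rewrite /F eset; exact: measurable_set1.
have tF : trivIset setT F.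
  move=> i j _ _ [x]; rewrite /F /= => [[h1 h2]].
  by apply: fI; apply: (addrI x); rewrite h1 h2.
have := @charge_semi_additive _ _ _ nu F n mF tF (bigsetU_measurable _ _).
move=> /(_ (fun k _ => mF k)) eq.
have mU : measurable (\big[setU/set0]_(k < n) F k).
  by apply: bigsetU_measurable => k _; exact: mF.
have := hM _ mU.
rewrite eq.
have : \sum_(i < n) c%:E <= \sum_(i < n) nu (F i).
  by apply: lee_sum => i _; apply/ltW; apply: (fS i).
rewrite sumEFin sumr_const card_ord => h1 h2.
have := le_trans h1 h2; rewrite lee_fin; apply/negP; rewrite -ltNge.
rewrite -mulr_natr -ltr_pdivrMl // mulrC.
exact: truncnS_gt.
Qed.

Lemma small_inv {R : realType} (r : R) : (0 < r)%R -> exists n : nat, (n.+1%:R^-1 < r)%R.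
Proof.
move=> r0; exists (Num.Def.trunc r^-1); rewrite invf_plt ?posrE //; first exact: truncnS_gt.
Qed.

Lemma countable_null (R : realType) (mu : {measure set R -> \bar R}) (Z : set R) :
  atomless mu -> countable Z -> mu.-negligible Z.
Proof.
move=> am /countable_injP [f finj].
apply: (@negligibleS _ _ _ mu (\bigcup_n (Z `&` f @^-1` [set n]))).
  by move=> y Zy; exists (f y) => //.
apply: negligible_bigcup => n.
have [[y0 [Zy0 fy0]]|] := pselect (exists y, (Z `&` f @^-1` [set n]) y).
  apply: (@negligibleS _ _ _ mu [set y0]).
    move=> y [Zy fy]; by apply: finj; rewrite ?inE //= fy fy0.
  exists [set y0]; split; [exact: measurable_set1|exact: am|by []].
move=> nex; apply: (@negligibleS _ _ _ mu set0); last exact: negligible_set0.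
by move=> y hy; apply: nex; exists y.
Qed.

Lemma conv0 (R : realType) (mu : probability R R) (eta : {charge set R -> \bar R}) :
  atomless mu -> \int[mu]_y eta [set x | x + y = 0]%R = 0.
Proof.
move=> am.
set g := fun y => eta [set x | x + y = 0]%R.
pose Z := [set y | g y != 0].
have cZ : countable Z.
  apply: (@sub_countable _ _ _ (\bigcup_(n in [set: nat])
     ([set y | (n.+1%:R^-1)%:E < eta [set x | x + y = 0]%R] `|`
      [set y | (n.+1%:R^-1)%:E < copp eta [set x | x + y = 0]%R]))).
    apply: subset_card_le => y /= gy.
    have : g y \is a fin_num.
      by apply: fin_num_measure; rewrite eset; exact: measurable_set1.
    move/fineK; set r := fine _ => hr; have {}gy : r%:E != 0 by rewrite hr.
    have [r0|r0] := ltP 0%R r.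
      have [n hn] := @small_inv _ _ r0; exists n => //; left => /=.
      by rewrite -[eta _]/(g y) -hr lte_fin.
    have rn : (r < 0)%R by rewrite lt_neqAle r0 andbT; apply: contraNN gy => /eqP ->.
    have rn2 : (0 < - r)%R by rewrite oppr_gt0.
    have [n hn] := @small_inv _ _ rn2; exists n => //; right => /=.
    by rewrite /copp /= -[eta _]/(g y) -hr /= lte_fin.
  apply: bigcup_countable => // n _.
  apply: finite_set_countable; rewrite finite_setU; split; exact: atoms_finite.
have mZ : measurable Z by apply: countable_measurable => // t; exact: measurable_set1.
have gZ : forall x, (~` Z) x -> g x = 0.
  by move=> x; rewrite /Z /= => /negP; rewrite negbK => /eqP.
have mg : measurable_fun [set: R] g.
  move=> _ B mB; rewrite setTI.
  have -> : g @^-1` B = (Z `&` g @^-1` B) `|` (~` Z `&` g @^-1` B).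
    by rewrite -setIUl setUCr setTI.
  apply: measurableU.
    apply: countable_measurable; first by move=> t; exact: measurable_set1.
    by apply: sub_countable cZ; apply: subset_card_le; exact: subIsetl.
  have [B0|B0] := pselect (B 0).
    have -> : ~` Z `&` g @^-1` B = ~` Z.
      apply/seteqP; split => [x []//|x nZx]; split => //=.
      by rewrite gZ.
    exact: measurableC.
  have -> : ~` Z `&` g @^-1` B = set0.
    by apply/seteqP; split => [x [nZx]/=|x []//]; rewrite gZ.
  exact: measurable0.
rewrite (ae_eq_integral (cst 0)) //; first exact: integral0.
apply: (@negligibleS _ _ _ mu Z); last exact: countable_null.
move=> y /= h; apply/negP => /eqP gy; apply: h => _; exact: gy.
Qed.

Theorem lemma7 (R : realType) (mu_eps : probability R R)
  (eta : {charge set R -> \bar R}) :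
  atomless mu_eps \/ atomless eta ->
  1 <= tot_var_measure (pi_conv eta mu_eps) [set: R].
Proof.
move=> H.
have c0 : convol mu_eps eta [set 0%R] = 0.
  rewrite /convol; case: H => [am|ae]; first exact: conv0.
  rewrite (_ : (fun y => eta [set x | [set 0%R] (x + y)%R]) = cst 0); first exact: integral0.
  by apply/funext => y; rewrite /= eset; exact: ae.
pose F (i : nat) : set R := if i == 0%N then [set 0%R] else if i == 1%N then ~` [set 0%R] else set0.
have h1 : 1 <= \sum_(i < 2) `|pi_conv eta mu_eps (F i)|.
  rewrite !big_ord_recl big_ord0 adde0 /= /pi_conv c0 diracE in_set1 eqxx /=.
  by rewrite subr0 normr1 leeDl.
apply: le_trans h1 _.
apply: ereal_sup_ubound; exists 2%N, F; split => //.
- by move=> [|[|i]] /=; [exact: measurable_set1|exact: measurableC (measurable_set1 _)|exact: measurable0].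
- move=> i j ilt jlt [x []]; rewrite /F.
  case: i j ilt jlt => [|[|i]] [|[|j]] //= _ _ a b; by [exfalso; apply: b|exfalso; apply: a].
- apply/seteqP; split => // x _.
  have [->|x0] := eqVneq x 0%R; first by exists 0%N.
  by exists 1%N => //=; rewrite /F /=; apply/eqP.
Qed.
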